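(* Let $d\geq 1$. The moduli orders $r_{PP}$, $r_{PN}$, $r_{NP}$, $r_{NN}$ of length $d$ are rigid. More precisely, let $Q$ be a hyperbolic polynomial of degree $d$ with positive leading coefficient, all coefficients nonzero and roots of pairwise distinct moduli. - If $Q$ defines $r_{PN}$ (when $d$ is even) or $r_{NN}$ (when $d$ is odd), then $Q$ defines the sign pattern $\Sigma_+$ of length $d+1$. - If $Q$ defines $r_{NP}$ (when $d$ is even) or $r_{PP}$ (when $d$ is odd), then $Q$ defines the sign pattern $\Sigma_-$ of length $d+1$.
   Context: A hyperbolic polynomial (HP) is a real univariate polynomial all of whose roots are real. The sign pattern (SP) defined by a polynomial $a_dx^d+\dots+a_0$ with $a_d>0$ and all $a_j\neq0$ is $(\mathrm{sgn}(a_d),\mathrm{sgn}(a_{d-1}),\dots,\mathrm{sgn}(a_0))$. A moduli order (MO) of length $d$ is a string of $d$ letters $P$/$N$ separated by $<$. A HP defines the MO obtained by listing the moduli of its roots in increasing order, writing $P$ for a positive root and $N$ for a negative root. A MO is rigid if all HPs (with positive leading coefficient, nonzero coefficients, roots of distinct moduli) defining it define the same SP. The alternating MOs are: $r_{PN}: P<N<P<N<\dots<N$; $r_{PP}: P<N<\dots<P$; $r_{NP}: N<P<\dots<P$; $r_{NN}: N<P<\dots<N$. In each, letters alternate, and the first and last letters are given by the subscripts. The sign pattern $\Sigma_+$ of length $d+1$ is $(+,+,-,-,+,+,-,-,\dots)$. Its entry in position $k$ (for $k=0,\dots,d$, i.e. the sign of the coefficient of $x^{d-k}$) is $+$ if $k\equiv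 0,1 \pmod 4$ and $-$ if $k\equiv 2,3\pmod 4$. The sign pattern $\Sigma_-$ of length $d+1$ is $(+,-,-,+,+,-,-,+,\dots)$. Its entry in position $k$ is $+$ if $k\equiv 0,3\pmod 4$ and $-$ if $k\equiv 1,2\pmod 4$. *)

(* Defs.v *)
From mathcomp Require Import all_boot all_order all_algebra.
Set Implicit Arguments. Unset Strict Implicit. Unset Printing Implicit Defensive.
Import Order.TTheory GRing.Theory Num.Theory.
Local Open Scope ring_scope.

Section Defs.
Variable R : realFieldType.

(* Hyperbolic polynomial: all roots real, i.e. Q splits into linear
   factors over R. *)
Definition hyperbolic (Q : {poly R}) : Prop :=
  exists s : seq R, Q = lead_coef Q *: \prod_(x <- s) ('X - x%:P).

Definition distinct_moduli (Q : {poly R}) : Prop :=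
  exists s : seq R, Q = lead_coef Q *: \prod_(x <- s) ('X - x%:P)
                    /\ uniq [seq `|x| | x <- s].

(* A moduli order is encoded as a seq bool: true = P (positive root),
   false = N (negative root), listed by increasing modulus. *)
Definition defines_MO (Q : {poly R}) (mo : seq bool) : Prop :=
  exists s : seq R, Q = lead_coef Q *: \prod_(x <- s) ('X - x%:P)
    /\ sorted (fun x y => `|x| < `|y|) s
    /\ [seq (0 < x) | x <- s] = mo.

(* A sign pattern is encoded as a seq bool: true = +, false = -,
   listed from the leading coefficient a_d down to a_0. *)
Definition defines_SP (Q : {poly R}) (sp : seq bool) : Prop :=
  [seq (0 < a) | a <- rev (polyseq Q)] = sp.
End Defs.

Definition alt_startP (d : nat) : seq bool := mkseq (fun i => ~~ odd i) d.
Definition alt_startN (d : nat) : seq bool := mkseq (fun i => odd i) d.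
(* r_PN (d even) and r_PP (d odd) start with P; r_NP (d even) and
   r_NN (d odd) start with N. *)
Definition r_PN (d : nat) := alt_startP d.
Definition r_PP (d : nat) := alt_startP d.
Definition r_NP (d : nat) := alt_startN d.
Definition r_NN (d : nat) := alt_startN d.

Definition Sigma_plus (d : nat) : seq bool :=
  mkseq (fun k => (k %% 4 == 0)%N || (k %% 4 == 1)%N) d.+1.
Definition Sigma_minus (d : nat) : seq bool :=
  mkseq (fun k => (k %% 4 == 0)%N || (k %% 4 == 3)%N) d.+1.

(* Main.v *)
Require Import Defs.
From mathcomp Require Import all_boot all_order all_algebra.
From mathcomp Require Import zify ring lra.
Import Order.TTheory GRing.Theory Num.Theory.
Local Open Scope ring_scope.
Set Implicit Arguments. Unset Strict Implicit. Unset Printing Implicit Defensive.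

Section S.
Variable R : realFieldType.

Fixpoint esym (t : seq R) (k : nat) : R :=
  match t, k with
  | [::], 0%N => 1
  | [::], _.+1 => 0
  | _ :: _, 0%N => 1
  | y :: t', k'.+1 => esym t' k'.+1 + y * esym t' k'
  end.

Lemma esym0 t : esym t 0 = 1. Proof. by case: t. Qed.

Lemma esymS y t k : esym (y :: t) k.+1 = esym t k.+1 + y * esym t k.
Proof. by []. Qed.

Lemma esym_big t k : (size t < k)%N -> esym t k = 0.
Proof.
elim: t k => [|y t IH] [|k] // Hk.
rewrite esymS; rewrite /= ltnS in Hk.
by rewrite (IH k.+1) ?(IH k) ?mulr0 ?addr0 // ltnW.
Qed.

Lemma coef_prod t k : (k <= size t)%N ->
  (\prod_(x <- t) ('X - x%:P))`_(size t - k) = (-1)^+k * esym t k.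
Proof.
elim: t k => [|y t IH] k Hk.
  by case: k Hk => //= _; rewrite big_nil coef1 expr0 mul1r.
rewrite big_cons mulrBl coefB coefXM coefCM.
set p := \prod_(x <- t) ('X - x%:P).
have sp : size p = (size t).+1 by rewrite size_prod_XsubC.
have lp : p`_(size t) = 1.
  have /monicP := monic_prod_XsubC t (fun _ => true) id.
  by rewrite lead_coefE -/p sp.
case: k Hk => [|k] Hk.
  rewrite subn0 /= lp nth_default ?sp // mulr0 subr0 expr0 mul1r.
  by case: (t).
rewrite subSS.
case: (ltnP k (size t)) => Hkt.
  have -> : (size t - k == 0)%N = false by apply/negbTE; rewrite subn_eq0 -ltnNge.
  have -> : (size t - k).-1 = (size t - k.+1)%N by lia.
  rewrite IH // IH 1?ltnW // esymS exprS /=. ring.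
have ek : k = size t by move: Hk Hkt => /=; lia.
rewrite ek subnn eqxx /=.
have := IH (size t) (leqnn _); rewrite subnn -/p => ->. rewrite (esym_big (k:=(size t).+1)) // exprS; ring.
Qed.

Definition hs (b : bool) (k : nat) : bool :=
  if b then (k %% 4 < 2)%N else (k %% 4 == 0)%N || (k %% 4 == 3)%N.

Lemma mod4_cases k : (k %% 4 = 0 \/ k %% 4 = 1 \/ k %% 4 = 2 \/ k %% 4 = 3)%N.
Proof. lia. Qed.

Lemma odd_mod4 k : odd k = odd (k %% 4).
Proof. by rewrite [in LHS](divn_eq k 4) oddD oddM /= andbF. Qed.

Lemma hsS b k : hs b k.+1 = (b == hs (~~b) k).
Proof.
rewrite /hs; have h' : (k.+1 %% 4 = (k %% 4).+1 %% 4)%N by lia.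
rewrite h'; case: (mod4_cases k) => [h|[h|[h|h]]]; rewrite h; by case: b.
Qed.

Lemma hs_neg b k : hs (~~b) k = (if odd k then ~~ hs b k else hs b k).
Proof.
rewrite /hs odd_mod4; case: (mod4_cases k) => [h|[h|[h|h]]]; rewrite h; by case: b.
Qed.

Definition sgP (s : bool) (x : R) := if s then 0 < x else x < 0.

Lemma sgP_neq0 s x : sgP s x -> x != 0.
Proof. by case: s => /= h; rewrite ?(gt_eqF h) ?(lt_eqF h). Qed.

Lemma sgP_add s u v : sgP s u \/ u = 0 -> sgP s v -> sgP s (u + v).
Proof. by case: s => /=; case=> [h|->] hv; lra. Qed.

Lemma sgP_mul s1 s2 x y : sgP s1 x -> sgP s2 y -> sgP (s1 == s2) (x * y).
Proof.
case: s1; case: s2 => /= hx hy.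
- exact: mulr_gt0.
- by rewrite pmulr_rlt0.
- by rewrite nmulr_rlt0.
- by rewrite nmulr_rgt0.
Qed.

Lemma sgP_opp s u v : sgP (~~ s) u \/ u = 0 -> sgP s v -> `|u| < `|v| -> sgP s (u + v).
Proof.
case: s => /=; case=> [h|->] hv; rewrite ?normr0 => hn; try lra.
- by rewrite (ltr0_norm h) (gtr0_norm hv) in hn; lra.
- by rewrite (gtr0_norm h) (ltr0_norm hv) in hn; lra.
Qed.

Lemma norm_opp s u v : sgP (~~ s) u \/ u = 0 -> sgP s v -> `|u| <= `|v| -> `|u + v| <= `|v|.
Proof.
case: s => /=; case=> [h|->] hv; rewrite ?normr0 ?add0r // => hn.
- rewrite (ltr0_norm h) (gtr0_norm hv) in hn *; rewrite ler_norml; lra.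
- rewrite (gtr0_norm h) (ltr0_norm hv) in hn *; rewrite ler_norml; lra.
Qed.

Lemma norm_same s u v : sgP s u -> sgP s v -> `|u| <= `|u + v|.
Proof.
case: s => /= hu hv.
- rewrite (gtr0_norm hu) gtr0_norm; lra.
- rewrite (ltr0_norm hu) ltr0_norm; lra.
Qed.


Lemma key (t : seq R) (b : bool) :
  sorted (fun x y => `|y| < `|x|) t ->
  (forall i, (i < size t)%N -> (0 < t`_i) = b (+) odd i) ->
  (forall i, (i < size t)%N -> t`_i != 0) ->
  forall k, (k <= size t)%N ->
    sgP (hs b k) (esym t k) /\ (odd k -> `|esym t k| <= `|t`_0| * `|esym t k.-1|).
Proof.
elim: t b => [|y t IH] b Hs Ha Hn k Hk.
  by case: k Hk => // _; split => //; rewrite /sgP /hs; case: (b); rewrite /= ltr01.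
case: k Hk => [|k] Hk.
  by split => //; rewrite esym0 /sgP /hs; case: (b); rewrite /= ltr01.
have Hs' : sorted (fun x y => `|y| < `|x|) t := path_sorted Hs.
have Ha' : forall i, (i < size t)%N -> (0 < t`_i) = ~~b (+) odd i.
  move=> i hi; have := Ha i.+1 hi; rewrite /= => ->; by case: (b); case: odd.
have Hn' : forall i, (i < size t)%N -> t`_i != 0 by move=> i hi; exact: (Hn i.+1 hi).
have Hy : sgP b y.
  have := Ha 0%N isT; have := Hn 0%N isT; rewrite /= addbF /sgP => hn hp.
  by move: hp; case: (b) => hp; rewrite ?hp // lt_neqAle hn /= leNgt hp.
have Hty : (0 < size t)%N -> `|t`_0| < `|y|.
  by case: (t) Hs => //= z u /andP[].
have Hk' : (k <= size t)%N by [].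
have [IHs IHb] := IH (~~b) Hs' Ha' Hn' k Hk'.
have Hv : sgP (hs b k.+1) (y * esym t k) by rewrite hsS; apply: sgP_mul.
have Hu : esym t k.+1 = 0 \/ (sgP (hs (~~b) k.+1) (esym t k.+1) /\
            (odd k.+1 -> `|esym t k.+1| < `|y| * `|esym t k|)).
  case: (ltnP k (size t)) => hk.
    right; have [A B] := IH (~~b) Hs' Ha' Hn' k.+1 hk; split => // ho.
    apply: le_lt_trans (B ho) _; rewrite ltr_pM2r ?normr_gt0 ?(sgP_neq0 IHs) //.
    apply: Hty; lia.
  by left; apply: esym_big; rewrite ltnS.
rewrite esymS.
case Ok: (odd k.+1).
  have Hu' : sgP (~~ hs b k.+1) (esym t k.+1) \/ esym t k.+1 = 0.
    by case: Hu => [->|[A _]]; [right | left; move: A; rewrite hs_neg Ok].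
  have Hlt : `|esym t k.+1| < `|y * esym t k|.
    case: Hu => [->|[_ B]]; last by rewrite normrM; exact: B.
    by rewrite normr0 normr_gt0 mulf_neq0 ?(sgP_neq0 Hy) ?(sgP_neq0 IHs).
  split; first exact: sgP_opp Hu' Hv Hlt.
  move=> _ /=.
  apply: le_trans (norm_opp Hu' Hv (ltW Hlt)) _.
  rewrite normrM ler_wpM2l //.
  have Ek : odd k = false by move: Ok => /=; case: odd.
  case: k {Hk IHs IHb Hv Hu Hu' Hlt Ok} Hk' Ek => [|j] Hk' Ej.
    by rewrite !esym0.
  
  have [IHs2 _] := IH (~~b) Hs' Ha' Hn' j (ltnW Hk').
  have [IHs1 _] := IH (~~b) Hs' Ha' Hn' j.+1 Hk'.
  have Hv2 : sgP (hs b j.+1) (y * esym t j) by rewrite hsS; apply: sgP_mul.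
  rewrite hs_neg Ej in IHs1.
  exact: norm_same IHs1 Hv2.
split => //.
apply: sgP_add Hv.
by case: Hu => [->|[A _]]; [right | left; move: A; rewrite hs_neg Ok].
Qed.


Lemma sp_of_mo d (Q : {poly R}) c : (1 <= d)%N -> size Q = d.+1 -> 0 < lead_coef Q -> Q`_0 != 0 ->
  defines_MO Q (mkseq (fun i => c (+) odd i) d) ->
  defines_SP Q (mkseq (fun k => hs (c (+) odd d.-1) k (+) odd k) d.+1).
Proof.
move=> d1 sQ lc q0 [s [HQ [Hso Hmo]]].
set p := \prod_(x <- s) ('X - x%:P) in HQ.
have ss : size s = d.
  have := congr1 (fun q : {poly R} => size q) HQ; rewrite /= size_scale ?lt0r_neq0 // size_prod_XsubC sQ.
  by case.
set t := rev s.
have Hp : p = \prod_(x <- t) ('X - x%:P) by rewrite big_rev.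
have st : size t = d by rewrite size_rev.
have Hs : sorted (fun x y => `|y| < `|x|) t by rewrite rev_sorted.
have Ha : forall i, (i < size t)%N -> (0 < t`_i) = (c (+) odd d.-1) (+) odd i.
  move=> i hi; rewrite st in hi.
  rewrite nth_rev ss //.
  have hj : (d - i.+1 < d)%N by lia.
  have := congr1 (fun l => nth false l (d - i.+1)%N) Hmo.
  rewrite /= (nth_map 0) ?ss // nth_mkseq // => ->.
  have -> : (d - i.+1 = d.-1 - i)%N by lia.
  by rewrite oddB ?addbA //; lia.
have Hn : forall i, (i < size t)%N -> t`_i != 0.
  move=> i hi; apply/eqP => h0; move: q0.
  rewrite -horner_coef0 HQ hornerZ.
  have : root p 0 by rewrite Hp root_prod_XsubC -h0 mem_nth.
  by move/eqP->; rewrite mulr0 eqxx.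
apply: (eq_from_nth (x0:=false)).
  by rewrite size_map size_rev sQ size_mkseq.
move=> i; rewrite size_map size_rev sQ => hi.
rewrite (nth_map 0) ?size_rev ?sQ // nth_rev ?sQ // nth_mkseq //.
have -> : (d.+1 - i.+1 = size t - i)%N by rewrite st.
rewrite HQ coefZ Hp coef_prod ?st //.
have [hk _] := key Hs Ha Hn (k:=i) ltac:(by rewrite st).
rewrite pmulr_rgt0 // -signr_odd.
move: hk; rewrite /sgP; case: (odd i); case: (hs _ i) => /= h;
  rewrite ?mul1r ?mulN1r ?oppr_gt0 ?h //.
- by apply/negbTE; rewrite -leNgt ltW.
- by apply/negbTE; rewrite -leNgt ltW.
Qed.

End S.

Lemma sig_plus d : Sigma_plus d = mkseq (fun k => hs false k (+) odd k) d.+1.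
Proof.
apply: eq_mkseq => k; rewrite /hs odd_mod4.
by case: (mod4_cases k) => [h|[h|[h|h]]]; rewrite h.
Qed.

Lemma sig_minus d : Sigma_minus d = mkseq (fun k => hs true k (+) odd k) d.+1.
Proof.
apply: eq_mkseq => k; rewrite /hs odd_mod4.
by case: (mod4_cases k) => [h|[h|[h|h]]]; rewrite h.
Qed.

Lemma altP d : alt_startP d = mkseq (fun i => true (+) odd i) d.
Proof. by []. Qed.

Lemma altN d : alt_startN d = mkseq (fun i => false (+) odd i) d.
Proof. by []. Qed.

Theorem theorem1p6 (R : realFieldType) (d : nat) (Q : {poly R}) :
  (1 <= d)%N ->
  size Q = d.+1 ->
  0 < lead_coef Q ->
  (forall i : nat, (i <= d)%N -> Q`_i != 0) ->
  hyperbolic Q ->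
  distinct_moduli Q ->
  ((if odd d then defines_MO Q (r_NN d) else defines_MO Q (r_PN d)) ->
     defines_SP Q (Sigma_plus d)) /\
  ((if odd d then defines_MO Q (r_PP d) else defines_MO Q (r_NP d)) ->
     defines_SP Q (Sigma_minus d)).
Proof.
move=> d1 sQ lc nz _ _.
have q0 := nz 0%N (leq0n d).
case: d d1 sQ nz => [//|d'] d1 sQ nz.
rewrite /r_NN /r_PN /r_PP /r_NP altP altN sig_plus sig_minus.
case Od: (odd d'); rewrite /= Od /=; split => H;
  first [have := sp_of_mo (c:=true) d1 sQ lc q0 H | have := sp_of_mo (c:=false) d1 sQ lc q0 H]; by rewrite /= Od.
Qed.
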